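(* Let $M=A+\Delta-\sigma vv^{\mathsf T}$ be a generalized modularity matrix, let $x\neq0$ satisfy $Mx=m_Gx$ with $v^{\mathsf T}x\ge 0$, and let $y$ be an entrywise positive eigenvector of $A+\Delta$ associated with $\lambda_1(A+\Delta)$. Then for every $\varepsilon\ge 0$, the set $S=\{i\in V: x_i+\varepsilon y_i\ge 0\}$ induces a connected subgraph $G(S)$ of $G$.
   Context: Let $V=\{1,\dots,n\}$ and let $A\in\mathbb{R}^{n\times n}$ be the adjacency matrix of an undirected connected weighted graph $G$ on $V$, possibly with loops, i.e. $A=(a_{ij})$ is symmetric, entrywise nonnegative and irreducible. A generalized modularity matrix is any matrix $M=A+\Delta-\sigma vv^{\mathsf T}$ where $\Delta$ is a real diagonal $n\times n$ matrix, $v\in\mathbb{R}^n$ is a nonzero entrywise nonnegative vector, and $\sigma>0$. Eigenvalues of a real symmetric matrix $X$ are ordered $\lambda_1(X)\ge\cdots\ge\lambda_n(X)$; $m_G:=\lambda_1(M)$. (An entrywise positive eigenvector $y$ for $\lambda_1(A+\Delta)$ exists by Perron–Frobenius theory.) For $S\subseteq V$, $G(S)$ denotes the subgraph induced by $S$, whose adjacency matrix is the principal submatrix $A(S)$; it is connected if the graph on vertex set $S$ in which distinct $i,j$ are adjacent iff $a_{ij}>0$ is connected. *)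

(* Defs.v *)
From HB Require Import structures.
From mathcomp Require Import all_boot all_order all_algebra.
Set Implicit Arguments. Unset Strict Implicit. Unset Printing Implicit Defensive.
Import Order.TTheory GRing.Theory Num.Theory.
Local Open Scope ring_scope.

Definition adj_in (R : realFieldType) (n : nat) (A : 'M[R]_n)
  (S : {set 'I_n}) : rel 'I_n :=
  fun i j => [&& i \in S, j \in S, i != j & 0 < A i j].

Definition induced_connected (R : realFieldType) (n : nat) (A : 'M[R]_n)
  (S : {set 'I_n}) : Prop :=
  forall i j, i \in S -> j \in S -> connect (adj_in A S) i j.

Definition graph_connected (R : realFieldType) (n : nat) (A : 'M[R]_n) : Prop :=
  induced_connected A [set: 'I_n].

Definition is_lambda1 (R : realFieldType) (n : nat) (X : 'M[R]_n) (lam : R)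
  : Prop :=
  eigenvalue X lam /\ (forall a, eigenvalue X a -> a <= lam).

(* Main.v *)
Require Import Defs.
From HB Require Import structures.
From mathcomp Require Import all_boot all_order all_algebra.
From mathcomp Require Import complex ring lra.
Import Order.TTheory GRing.Theory Num.Theory Num.Def.
Local Open Scope ring_scope.
Section Ray.
Variable R : rcfType.
Local Notation C := (complex R).
Local Notation f := (real_complex R).

Lemma conjf (a : R) : (f a)^* = f a.
Proof. apply: conj_Creal. by rewrite complex_real. Qed.

Lemma map_conj_f m k (M : 'M[R]_(m,k)) : map_mx Num.conj_op (map_mx f M) = map_mx f M.
Proof. by apply/matrixP => i j; rewrite !mxE conjf. Qed.

Lemma rayleigh n (X : 'M[R]_n) lam (w : 'cV[R]_n) :
  X^T = X -> (forall a, eigenvalue X a -> a <= lam) ->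
  (w^T *m X *m w) 0 0 <= lam * (w^T *m w) 0 0.
Proof.
move=> sX Hlam.
pose Xc := map_mx f X.
have Xh : Xc \is hermsymmx.
  apply: realsym_hermsym.
    apply/is_hermitianmxP; rewrite expr0 scale1r map_mx_id //.
    by rewrite /Xc map_trmx sX.
  by apply/mxOverP => i j; rewrite mxE complex_real.
pose P := spectralmx Xc; pose D := spectral_diag Xc.
have Pu : P \is unitarymx := spectral_unitarymx Xc.
have Punit : P \in unitmx := spectral_unit Xc.
have /orthomx_spectralP eXc := hermitian_normalmx Xh.
have Dreal := hermitian_spectral_diag_real Xh.
have HD : forall k, D 0 k <= f lam.
  move=> k.
  have Heig : eigenvalue Xc (D 0 k).
    apply/eigenvalueP; exists (row k P).
      have e2 : P *m Xc = diag_mx D *m P.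
        by rewrite {1}eXc !mulmxA mulmxV // mul1mx.
      by rewrite !rowE -mulmxA e2 mulmxA -rowE -(rowE k (diag_mx D)) row_diag_mx -scalemxAl -rowE.
    apply/eqP => /rowP h.
    move/unitarymxP: Pu => /matrixP /(_ k k).
    rewrite !mxE eqxx /= big1 => [|j _]; first by move/esym/eqP; rewrite oner_eq0.
    have := h j; rewrite !mxE => ->; by rewrite mul0r.
  have /complex_realP [r Dr] : D 0 k \is Num.real by apply: (mxOverP Dreal).
  rewrite Dr lecR; apply: Hlam.
  move: Heig; rewrite Dr eigenvalue_root_char /Xc -map_char_poly fmorph_root.
  by rewrite -eigenvalue_root_char.
pose u := map_mx f w^T.
have ut : (u ^t*)%sesqui = map_mx f w.
  by rewrite /u map_trmx trmxK map_conj_f.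
have tM : forall m k l (A : 'M[C]_(m,k)) (B : 'M[C]_(k,l)),
    ((A *m B) ^t*)%sesqui = (B ^t* *m A ^t*)%sesqui.
  by move=> m k l A B; rewrite trmx_mul map_mxM.
pose c := u *m (P ^t*)%sesqui.
have ct : (c ^t*)%sesqui = P *m (u ^t*)%sesqui by rewrite /c tM trmxCK.
have PtP : (P ^t*)%sesqui *m P = 1%:M by rewrite -invmx_unitary // mulVmx.
have eXc' : Xc = (P ^t*)%sesqui *m diag_mx D *m P by rewrite -invmx_unitary.
have E1 : f ((w^T *m X *m w) 0 0) = (c *m diag_mx D *m (c ^t*)%sesqui) 0 0.
  have -> : f ((w^T *m X *m w) 0 0) = (u *m Xc *m (u ^t*)%sesqui) 0 0.
    have e : f ((w^T *m X *m w) 0 0) = (map_mx f (w^T *m X *m w)) 0 0.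
      by rewrite [RHS]mxE.
    rewrite e.
    by rewrite !map_mxM ut.
  by rewrite eXc' ct /c !mulmxA.
have E2 : f ((w^T *m w) 0 0) = (c *m (c ^t*)%sesqui) 0 0.
  rewrite ct /c -mulmxA [_ *m (P *m _)]mulmxA PtP mul1mx ut.
  have -> : f ((w^T *m w) 0 0) = (map_mx f (w^T *m w)) 0 0 by rewrite [RHS]mxE.
  by rewrite !map_mxM.
rewrite -lecR rmorphM /= E1 E2; clearbody c.
rewrite mul_mx_diag !mxE mulr_sumr; apply: ler_sum => k _.
rewrite !mxE -mulrA [D 0 k * _]mulrC mulrA [lam%:C%C * _]mulrC.
by rewrite ler_wpM2l ?mul_conjC_ge0 ?HD.
Qed.
End Ray.

Lemma qf_sym (R : comRingType) n (Q : 'M[R]_n) (u w : 'cV[R]_n) :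
  Q^T = Q -> (u^T *m Q *m w) 0 0 = (w^T *m Q *m u) 0 0.
Proof.
move=> sQ; transitivity ((u^T *m Q *m w)^T 0 0); first by rewrite [RHS]mxE.
by rewrite !trmx_mul trmxK sQ mulmxA.
Qed.

Lemma entryDZ (R : ringType) (A B C D : 'M[R]_1) t :
  (A + t *: B + (t *: C + t *: (t *: D))) 0 0 =
  A 0 0 + t * B 0 0 + (t * C 0 0 + t * (t * D 0 0)).
Proof. by rewrite !mxE. Qed.

Lemma psd_ker (R : realFieldType) n (Q : 'M[R]_n) (w : 'cV[R]_n) :
  Q^T = Q -> (forall u : 'cV[R]_n, 0 <= (u^T *m Q *m u) 0 0) ->
  (w^T *m Q *m w) 0 0 = 0 -> Q *m w = 0.
Proof.
move=> sQ psd w0; set g := Q *m w.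
pose a := (g^T *m g) 0 0.
pose b := (g^T *m Q *m g) 0 0.
have ha : (g^T *m Q *m w) 0 0 = a by rewrite /a -mulmxA.
have hb : 0 <= b := psd g.
have key : forall t, 0 <= 2 * t * a + t ^+ 2 * b.
  move=> t; have := psd (w + t *: g).
  have tZ : (t *: g)^T = t *: g^T by apply/matrixP => ? ?; rewrite !mxE.
  rewrite mulmxDr [(w + _)^T]linearD /= tZ !mulmxDl -!scalemxAl -!scalemxAr.
  rewrite entryDZ w0 ha qf_sym // ha -/b.
  by move=> h; nra.
have aE : a = \sum_i g i 0 * g i 0 by rewrite /a mxE; apply: eq_bigr => i _; rewrite mxE.
have a_ge0 : 0 <= a by rewrite aE sumr_ge0 // => i _; rewrite -expr2 sqr_ge0.
have a0 : a = 0.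
  have b1 : 0 < b + 1 by rewrite ltr_wpDl.
  pose s := a / (b + 1).
  have hs : s * (b + 1) = a by rewrite /s divfK // gt_eqF.
  have s0 : 0 <= s by rewrite /s divr_ge0 // ltW.
  have := key (- s).
  move=> h; nra.
apply/matrixP => i k; rewrite ord1 [RHS]mxE.
move: a0; rewrite aE => /eqP; rewrite psumr_eq0 => [/allP H|l _]; last by rewrite -expr2 sqr_ge0.
have := H i (mem_index_enum i); rewrite mulf_eq0 orbb => /eqP //.
Qed.

Lemma cut_edge (R : realFieldType) n (A : 'M[R]_n) (T : {set 'I_n}) a b :
  A^T = A -> graph_connected A -> a \in T -> b \notin T ->
  exists k l, [/\ k \in T, l \notin T & 0 < A k l].
Proof.
move=> sA Gc aT bT.
case: (boolP [exists k, exists l, [&& k \in T, l \notin T & 0 < A k l]]).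
  by move=> /existsP [k /existsP [l /and3P [? ? ?]]]; exists k, l.
move=> /negP Hn; exfalso.
have cl : closed (adj_in A [set: 'I_n]) T.
  move=> x y /and4P [_ _ _ Axy].
  apply/idP/idP => h; apply/negPn/negP => h'; apply: Hn.
    by apply/existsP; exists x; apply/existsP; exists y; rewrite h h' Axy.
  apply/existsP; exists y; apply/existsP; exists x; rewrite h h' /=.
  by rewrite -{1}sA mxE.
have := closed_connect cl (Gc a b (in_setT a) (in_setT b)).
by rewrite aT (negbTE bT).
Qed.
Arguments cut_edge {R n A T a b}.

Lemma Bentry (R : ringType) n (A : 'M[R]_n) (d : 'rV[R]_n) (w : 'cV[R]_n) k :
  ((A + diag_mx d) *m w) k 0 = \sum_l A k l * w l 0 + d 0 k * w k 0.
Proof. by rewrite mulmxDl mul_diag_mx !mxE. Qed.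

Lemma entryZB (R : ringType) m p (X Y : 'M[R]_(m,p)) (a : R) i k :
  (a *: X - Y) i k = a * X i k - Y i k.
Proof. by rewrite !mxE. Qed.

Lemma qf_sum (R : ringType) n (w : 'cV[R]_n) (X : 'cV[R]_n) :
  (w^T *m X) 0 0 = \sum_k w k 0 * X k 0.
Proof. by rewrite mxE; apply: eq_bigr => k _; rewrite mxE. Qed.

Lemma comb (R : rcfType) n (A : 'M[R]_n) (d : 'rV[R]_n) (v : 'cV[R]_n)
  (sigma mG : R) (z r : 'cV[R]_n) (M : 'M[R]_n) :
  A^T = A -> (forall i j, 0 <= A i j) -> graph_connected A ->
  M = A + diag_mx d - sigma *: (v *m v^T) -> M^T = M ->
  (forall w : 'cV[R]_n, (w^T *m M *m w) 0 0 <= mG * (w^T *m w) 0 0) ->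
  (A + diag_mx d) *m z = mG *: z + r -> (forall k, 0 <= r k 0) ->
  induced_connected A [set i | 0 <= z i 0].
Proof.
move=> sA A0 Gc hM sM ray Bz r0.
set S := [set i | 0 <= z i 0].
have Sdef : forall k, (k \in S) = (0 <= z k 0) by move=> k; rewrite inE.
clearbody S.
move=> i j iS jS; apply/negPn/negP => nc.
have Asym : forall k l, A k l = A l k by move=> k l; rewrite -{1}sA mxE.
pose S1 := [set k in S | connect (adj_in A S) i k].
have adjsym : forall k l, adj_in A S k l -> adj_in A S l k.
  by move=> k l /and4P [kS lS kl Akl]; apply/and4P; split; rewrite // 1?eq_sym // -Asym.
have same : forall k l, k \in S -> l \in S -> 0 < A k l -> (k \in S1) = (l \in S1).
  move=> k l kS lS Akl; case: (eqVneq k l) => [-> //|kl].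
  have e1 : adj_in A S k l by apply/and4P.
  rewrite !inE kS lS /=; apply/idP/idP => h.
    exact: connect_trans h (connect1 e1).
  exact: connect_trans h (connect1 (adjsym _ _ e1)).
have iS1 : i \in S1 by rewrite inE iS connect0.
have jS1 : j \notin S1 by rewrite inE jS /= nc.
have [k1 [l1 [k1S1 l1S1 Ak1]]] := cut_edge sA Gc iS1 jS1.
have k1S : k1 \in S by move: k1S1; rewrite inE => /andP [].
have l1S : l1 \notin S.
  by apply/negP => l1S; move: l1S1; rewrite -(same k1 l1 k1S l1S Ak1) k1S1.
pose T2 := [set k in S | k \notin S1].
have jT2 : j \in T2 by rewrite inE jS jS1.
have iT2 : i \notin T2 by rewrite inE iS1 andbF.
have [k2 [l2 [k2T l2T Ak2]]] := cut_edge sA Gc jT2 iT2.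
have k2S : k2 \in S by move: k2T; rewrite inE => /andP [].
have k2S1 : k2 \notin S1 by move: k2T; rewrite inE => /andP [].
have l2S : l2 \notin S.
  apply/negP => l2S; move: l2T; rewrite inE l2S /= negbK => l2S1.
  by move: k2S1; rewrite (same k2 l2 k2S l2S Ak2) l2S1.
pose v1 := \sum_k (if k \in S1 then v k 0 * z k 0 else 0).
pose v2 := \sum_k (if k \in T2 then v k 0 * z k 0 else 0).
pose al := if (v1 == 0) && (v2 == 0) then 1 else v2.
pose be := if (v1 == 0) && (v2 == 0) then 1 else - v1.
have albe : (al != 0) || (be != 0).
  rewrite /al /be; case: ifP => [_|]; first by rewrite oner_eq0.
  by move/negbT; rewrite negb_and oppr_eq0 orbC.
have vw0 : al * v1 + be * v2 = 0.
  rewrite /al /be; case: ifP => [/andP [/eqP -> /eqP ->]|_]; first by rewrite !mulr0 addr0.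
  by rewrite mulrC mulNr addrN.
pose cf k := if k \in S1 then al else if k \in S then be else 0.
pose w := \col_k (cf k * z k 0).
have S1S : forall k, k \in S1 -> k \in S by move=> k; rewrite inE => /andP [].
have cfS : forall k, k \notin S -> cf k = 0.
  move=> k kS; rewrite /cf (negbTE kS); case: ifP => // /S1S kS'.
  by rewrite kS' in kS.
have vTw : v^T *m w = 0.
  apply/matrixP => a b; rewrite !ord1 [RHS]mxE mxE.
  transitivity (al * v1 + be * v2); last exact vw0.
  rewrite /v1 /v2 !mulr_sumr -big_split /=; apply: eq_bigr => k _.
  have T2def : (k \in T2) = (k \in S) && (k \notin S1) by rewrite inE.
  rewrite !mxE /cf T2def.
  case: (boolP (k \in S1)) => kS1; case: (boolP (k \in S)) => kS /=;
    rewrite ?mulr0 ?addr0 ?add0r ?mul0r ?mulr0 //; ring.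
have Mw : M *m w = (A + diag_mx d) *m w.
  by rewrite hM mulmxBl -scalemxAl -mulmxA vTw mulmx0 scaler0 subr0.
pose g k := r k 0 - \sum_l (if l \in S then 0 else A k l * z l 0).
have zneg : forall l, l \notin S -> z l 0 < 0 by move=> l; rewrite Sdef ltNge.
have g0 : forall k, 0 <= g k.
  move=> k; rewrite /g; apply: addr_ge0 (r0 k) _; rewrite oppr_ge0.
  apply: sumr_le0 => l _; case: ifP => // /negbT lS.
  by apply: mulr_ge0_le0 (A0 k l) _; rewrite ltW // zneg.
have gpos : forall k l, l \notin S -> 0 < A k l -> 0 < g k.
  move=> k l lS Akl; rewrite /g (bigD1 l) //= (negbTE lS).
  have h1 : \sum_(l0 | l0 != l) (if l0 \in S then 0 else A k l0 * z l0 0) <= 0.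
    apply: sumr_le0 => l' _; case: ifP => // /negbT l'S.
    by apply: mulr_ge0_le0 (A0 k l') _; rewrite ltW // zneg.
  have h2 : A k l * z l 0 < 0 by rewrite pmulr_rlt0 // zneg.
  have := r0 k; lra.
have Bw : forall k, k \in S -> ((A + diag_mx d) *m w) k 0 - mG * w k 0 = cf k * g k.
  move=> k kS; rewrite Bentry.
  have Bzk := congr1 (fun X : 'M[R]_(n,1) => X k 0) Bz; rewrite /= Bentry !mxE in Bzk.
  have e1 : \sum_l A k l * w l 0 = cf k * \sum_l (if l \in S then A k l * z l 0 else 0).
    rewrite mulr_sumr; apply: eq_bigr => l _; rewrite mxE.
    case: (boolP (l \in S)) => lS.
      have := A0 k l; rewrite le_eqVlt => /orP [/eqP <-|Apos].
        by rewrite !mul0r mulr0.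
      have -> : cf l = cf k by rewrite /cf -(same k l kS lS Apos) kS lS.
      ring.
    by rewrite (cfS l lS) mul0r !mulr0.
  have e2 : \sum_l A k l * z l 0 = \sum_l (if l \in S then A k l * z l 0 else 0)
       + \sum_l (if l \in S then 0 else A k l * z l 0).
    rewrite -big_split; apply: eq_bigr => l _ /=; case: ifP => _; rewrite ?addr0 ?add0r //.
  rewrite e1 /g !mxE; rewrite e2 in Bzk.
  move: Bzk; set P := \sum_l _; set N := \sum_l _ => Bzk.
  have -> : r k 0 = P + N + d 0 k * z k 0 - mG * z k 0 by lra.
  ring.
pose Q := mG%:M - M.
have sQ : Q^T = Q by rewrite /Q linearB /= tr_scalar_mx sM.
have qQ : forall u : 'cV_n, (u^T *m Q *m u) 0 0 = mG * (u^T *m u) 0 0 - (u^T *m M *m u) 0 0.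
  move=> u; rewrite /Q mulmxBr mulmxBl mul_mx_scalar -scalemxAl.
  by rewrite entryZB.
have psd : forall u : 'cV_n, 0 <= (u^T *m Q *m u) 0 0 by move=> u; rewrite qQ subr_ge0 ray.
have wQw : (w^T *m Q *m w) 0 0 = 0.
  apply/eqP; rewrite eq_le psd andbT.
  rewrite qQ -mulmxA Mw !qf_sum subr_le0 mulr_sumr -subr_ge0 -sumrB.
  apply: sumr_ge0 => k _.
  case: (boolP (k \in S)) => kS.
    have h := Bw k kS.
    have -> : w k 0 * ((A + diag_mx d) *m w) k 0 - mG * (w k 0 * w k 0) =
      w k 0 * (((A + diag_mx d) *m w) k 0 - mG * w k 0) by ring.
    rewrite h mxE.
    have -> : cf k * z k 0 * (cf k * g k) = (cf k * cf k) * (z k 0 * g k) by ring.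
    rewrite mulr_ge0 //; first by rewrite -expr2 sqr_ge0.
    by rewrite mulr_ge0 // -?Sdef ?g0.
  have wk0 : w k 0 = 0 by rewrite mxE (cfS k kS) mul0r.
  by rewrite wk0 !mul0r mulr0 subr0.
have Qw := @psd_ker _ _ Q w sQ psd wQw.
have hk : forall k, k \in S -> cf k * g k = 0.
  move=> k kS; rewrite -Bw //.
  have := congr1 (fun X : 'M[R]_(n,1) => X k 0) Qw; rewrite /Q mulmxBl mul_scalar_mx Mw /=.
  by rewrite entryZB [RHS]mxE => /eqP; rewrite subr_eq0 => /eqP ->; rewrite subrr.
have al0 : al = 0.
  have := hk k1 k1S; rewrite /cf k1S1 => /eqP; rewrite mulf_eq0 => /orP [/eqP //|].
  by rewrite gt_eqF // (gpos k1 l1).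
have be0 : be = 0.
  have := hk k2 k2S; rewrite /cf (negbTE k2S1) k2S => /eqP; rewrite mulf_eq0 => /orP [/eqP //|].
  by rewrite gt_eqF // (gpos k2 l2).
by move: albe; rewrite al0 be0 eqxx.
Qed.

Lemma entryZZ (R : ringType) m p (X Y : 'M[R]_(m,p)) (a b : R) i k :
  (a *: X + b *: Y) i k = a * X i k + b * Y i k.
Proof. by rewrite !mxE. Qed.

Theorem theorem3p4 (R : rcfType) (n : nat)
  (A : 'M[R]_n) (d : 'rV[R]_n) (v : 'cV[R]_n) (sigma : R)
  (x y : 'cV[R]_n) (mG mu eps : R) :
  A^T = A ->
  (forall i j, 0 <= A i j) ->
  graph_connected A ->
  (forall i, 0 <= v i 0) -> v != 0 ->
  0 < sigma ->
  is_lambda1 (A + diag_mx d - sigma *: (v *m v^T)) mG ->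
  x != 0 ->
  (A + diag_mx d - sigma *: (v *m v^T)) *m x = mG *: x ->
  0 <= (v^T *m x) 0 0 ->
  is_lambda1 (A + diag_mx d) mu ->
  (A + diag_mx d) *m y = mu *: y ->
  (forall i, 0 < y i 0) ->
  0 <= eps ->
  induced_connected A [set i | 0 <= x i 0 + eps * y i 0].
Proof.
move=> sA A0 Gc v0 vn0 sig0 [_ HmG] xn0 Mx c0 [_ Hmu] By y0 eps0.
have tZ : forall (a : R) (X : 'M[R]_n), (a *: X)^T = a *: X^T.
  by move=> a X; apply/matrixP => ? ?; rewrite !mxE.
have sB : (A + diag_mx d)^T = A + diag_mx d by rewrite linearD /= sA tr_diag_mx.
have sM : (A + diag_mx d - sigma *: (v *m v^T))^T = A + diag_mx d - sigma *: (v *m v^T).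
  by rewrite [(_ - _)^T]linearB /= sB tZ trmx_mul trmxK.
pose cx := (v^T *m x) 0 0.
have vx : v *m (v^T *m x) = cx *: v by rewrite [v^T *m x]mx11_scalar mul_mx_scalar.
have Bx : (A + diag_mx d) *m x = mG *: x + (sigma * cx) *: v.
  move: Mx; rewrite mulmxBl -scalemxAl -mulmxA vx scalerA => h.
  by rewrite -h subrK.
have ray := fun w => @rayleigh R n _ mG w sM HmG.
have xv : (x^T *m v) 0 0 = cx.
  transitivity ((x^T *m v)^T 0 0); first by rewrite [RHS]mxE.
  by rewrite trmx_mul trmxK.
have [k xk] : exists k, x k 0 != 0.
  case: (boolP [exists k, x k 0 != 0]) => [/existsP [k h]|/negP h]; first by exists k.
  exfalso; move/negP: xn0; apply; apply/eqP/matrixP => a b; rewrite ord1 mxE.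
  by apply/eqP/negPn/negP => hb; apply: h; apply/existsP; exists a.
have xx : 0 < (x^T *m x) 0 0.
  rewrite qf_sum (bigD1 k) //=.
  have h1 : 0 <= \sum_(i | i != k) x i 0 * x i 0.
    by apply: sumr_ge0 => i _; rewrite -expr2 sqr_ge0.
  have h2 : 0 < x k 0 * x k 0 by rewrite -expr2 lt_def sqrf_eq0 xk sqr_ge0.
  lra.
have mGmu : mG <= mu.
  have h1 := @rayleigh R n (A + diag_mx d) mu x sB Hmu.
  rewrite -mulmxA Bx mulmxDr -!scalemxAr entryZZ xv in h1.
  have h2 : 0 <= sigma * cx * cx by rewrite !mulr_ge0 // ltW.
  rewrite -(ler_pM2r xx); lra.
pose z := x + eps *: y.
pose r := (sigma * cx) *: v + (eps * (mu - mG)) *: y.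
have Bz : (A + diag_mx d) *m z = mG *: z + r.
  rewrite /z /r mulmxDr -scalemxAr Bx By.
  by apply/matrixP => a b; rewrite !mxE; ring.
have r0 : forall k, 0 <= r k 0.
  move=> i; rewrite /r !mxE; apply: addr_ge0.
    by apply: mulr_ge0 (v0 i); apply: mulr_ge0 (ltW sig0) c0.
  apply: mulr_ge0; last exact: ltW (y0 i).
  apply: mulr_ge0 eps0 _.
  by rewrite subr_ge0.
have -> : [set i | 0 <= x i 0 + eps * y i 0] = [set i | 0 <= z i 0].
  by apply/setP => i; rewrite !inE !mxE.
exact: (@comb R n A d v sigma mG z r _ sA A0 Gc erefl sM ray Bz r0).
Qed.
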